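(* Let $\alpha\in\mathbb N^n$ and let $\mathcal M$ be a matroid on $[n]$, regarded as a discrete polymatroid whose bases are $(0,1)$-vectors. If $\mathcal M$ satisfies White's conjecture, i.e. its toric ideal $I_{\mathcal M}$ is generated by quadratic binomials corresponding to double swaps, then $\mathcal M^\alpha$ satisfies White's conjecture, i.e. $I_{\mathcal M^\alpha}$ is generated by quadratic binomials corresponding to double swaps.
   Context: $K$ is a field, $\mathbb N$ the positive integers. For a discrete polymatroid (in particular a matroid) $P\subset\mathbb Z^n_+$ with set of bases $\mathcal B_P$ (the $\preceq$-maximal elements), $S_P=K[y_{\mathbf u}:\mathbf u\in\mathcal B_P]$ and $I_P$ is the kernel of the $K$-algebra map $S_P\to K[x_1,\ldots,x_n]$, $y_{\mathbf u}\mapsto x_1^{\mathbf u(1)}\cdots x_n^{\mathbf u(n)}$. A pair of bases $(\mathbf v_1,\mathbf v_2)$ is obtained from $(\mathbf u_1,\mathbf u_2)$ by a double swap if $\mathbf v_1=\mathbf u_1+\epsilon_j-\epsilon_i$, $\mathbf v_2=\mathbf u_2+\epsilon_i-\epsilon_j$ with $\mathbf u_1(i)>\mathbf u_2(i)$ and $\mathbf u_2(j)>\mathbf u_1(j)$; the corresponding binomial is $y_{\mathbf u_1}y_{\mathbf u_2}-y_{\mathbf v_1}y_{\mathbf v_2}$. For $\alpha=(k_1,\ldots,k_n)$, index coordinates of $\mathbb Z^{|\alpha|}$ by pairs $(i,j)$, $1\le j\le k_i$, let $\pi_0(\mathbf w)(i)=\sum_j\mathbf w(i,j)$, and $\mathbf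 u^\alpha=\{\mathbf w\in\mathbb Z^{|\alpha|}_+:\pi_0(\mathbf w)=\mathbf u\}$. $P^\alpha$ is the discrete polymatroid with set of bases $\bigcup_{\mathbf u\in\mathcal B_P}\mathbf u^\alpha$ (for a matroid these bases are again $(0,1)$-vectors, so $\mathcal M^\alpha$ is a matroid). *)

(* Defs.v *)
From HB Require Import structures.
From mathcomp Require Import all_boot all_order all_algebra.
From mathcomp Require Import mpoly.

Set Implicit Arguments.
Unset Strict Implicit.
Unset Printing Implicit Defensive.

Import GRing.Theory.
Local Open Scope ring_scope.

(* A matroid on a finite ground set E is given by its set of bases; a basis
   B is identified with its (0,1)-vector, the indicator vector [e \in B]. *)

Section Matroid.
Variable E : finType.

Definition ivec (U : {set E}) : E -> int := fun e => ((e \in U) : nat)%:Z.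

Definition eps (e : E) : E -> int := fun e' => ((e' == e) : nat)%:Z.

Definition is_matroid (B : {set {set E}}) : Prop :=
  (exists U, U \in B) /\
  forall U1 U2, U1 \in B -> U2 \in B ->
    forall x, x \in U1 :\: U2 ->
      exists2 y, y \in U2 :\: U1 & (U1 :\ x) :|: [set y] \in B.

Definition double_swap (U1 U2 V1 V2 : {set E}) : Prop :=
  exists i j : E,
    [/\ ivec U1 i > ivec U2 i, ivec U2 j > ivec U1 j,
        (forall e, ivec V1 e = ivec U1 e + eps j e - eps i e) &
        (forall e, ivec V2 e = ivec U2 e + eps i e - eps j e)].

Variable K : fieldType.
Variable B : {set {set E}}.

Definition basisT := {U : {set E} | U \in B}.

Definition SP := {mpoly K[#|{: basisT}|]}.
Definition XP := {mpoly K[#|{: E}|]}.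

Definition yvar (u : basisT) : SP := 'X_(enum_rank u).
Definition xvar (e : E) : XP := 'X_(enum_rank e).

Definition xmon (U : {set E}) : XP := \prod_(e : E) xvar e ^+ (e \in U).

Definition toric_map (p : SP) : XP :=
  p \mPo [tuple xmon (val (enum_val i)) | i < #|{: basisT}|].

Definition toric_ideal : pred SP := fun p => toric_map p == 0.

Definition double_swap_binomial (p : SP) : Prop :=
  exists u1 u2 v1 v2 : basisT,
    double_swap (val u1) (val u2) (val v1) (val v2) /\
    p = yvar u1 * yvar u2 - yvar v1 * yvar v2.

End Matroid.

Definition in_ideal_gen (R : comNzRingType) (G : R -> Prop) (p : R) : Prop :=
  exists s : seq (R * R), (forall x, x \in s -> G x.2) /\
                          p = \sum_(x <- s) x.1 * x.2.

Definition white (E : finType) (K : fieldType) (B : {set {set E}}) : Prop :=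
  forall p : SP K B, toric_ideal p <-> in_ideal_gen (@double_swap_binomial E K B) p.

(* the ground set of M^alpha: pairs (i, j) with j < k i *)
Definition alphaE (n : nat) (k : 'I_n -> nat) := {i : 'I_n & 'I_(k i)}.

(* bases of M^alpha: the (0,1)-vectors w with pi_0(w) = u for some basis u *)
Definition alpha_bases (n : nat) (k : 'I_n -> nat) (B : {set {set 'I_n}})
  : {set {set alphaE k}} :=
  [set W : {set alphaE k} |
     [exists U in B, [forall i : 'I_n,
        (\sum_(j < k i) ((Tagged (fun i0 => 'I_(k i0)) j \in W) : nat))%N
          == (i \in U) ]]].

(* Main.v *)
Require Import Defs.
From HB Require Import structures.
From mathcomp Require Import all_boot all_order all_algebra.
From mathcomp Require Import mpoly ssrcomplements.
From Stdlib Require Import ClassicalEpsilon.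

Set Implicit Arguments.
Unset Strict Implicit.
Unset Printing Implicit Defensive.
Import GRing.Theory.
Local Open Scope ring_scope.

Section Ideal.
Variables (R : comNzRingType) (G : R -> Prop).
Local Notation N := (in_ideal_gen G).

Lemma N0 : N 0.
Proof. by exists [::]; split => //; rewrite big_nil. Qed.

Lemma ND p q : N p -> N q -> N (p + q).
Proof.
move=> [s [Hs ->]] [t [Ht ->]]; exists (s ++ t); split; last by rewrite big_cat.
by move=> x; rewrite mem_cat => /orP [/Hs|/Ht].
Qed.

Lemma NM r p : N p -> N (r * p).
Proof.
move=> [s [Hs ->]]; exists [seq (r * x.1, x.2) | x <- s]; split.
  by move=> x /mapP [y /Hs Hy ->].
by rewrite big_map mulr_sumr; apply: eq_bigr => x _; rewrite mulrA.
Qed.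

Lemma NN p : N p -> N (- p).
Proof. by move=> H; rewrite -mulN1r; apply: NM. Qed.

Lemma NB p q : N p -> N q -> N (p - q).
Proof. by move=> Hp Hq; apply: ND => //; apply: NN. Qed.

Lemma Nsum (I : eqType) (s : seq I) (F : I -> R) :
  (forall i, i \in s -> N (F i)) -> N (\sum_(i <- s) F i).
Proof.
elim: s => [|a s IH] H; first by rewrite big_nil; exact: N0.
rewrite big_cons; apply: ND; first by apply: H; rewrite inE eqxx.
by apply: IH => i Hi; apply: H; rewrite inE Hi orbT.
Qed.

Lemma Nrefl p : N (p - p).
Proof. by rewrite subrr; exact: N0. Qed.
End Ideal.

Lemma NZ (K : fieldType) (m : nat) (G : {mpoly K[m]} -> Prop) c p :
  in_ideal_gen G p -> in_ideal_gen G (c *: p).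
Proof. by move=> H; rewrite -mul_mpolyC; apply: NM. Qed.

Section Lext.
Variables (K : fieldType) (m : nat) (V : lmodType K).
Variable g : 'X_{1..m} -> V.

Definition lext (p : {mpoly K[m]}) : V := \sum_(d <- msupp p) p@_d *: g d.

Lemma lextE p w : (msize p <= w)%N ->
  lext p = \sum_(d : 'X_{1..m < w}) p@_d *: g d.
Proof.
move=> le_pi; set I : subFinType _ := 'X_{1..m < w}.
rewrite /lext (big_mksub I) ?msupp_uniq //=; first last.
  by move=> x /msize_mdeg_lt /leq_trans; apply.
rewrite big_rmcond //= => j /memN_msupp_eq0 ->.
by rewrite scale0r.
Qed.

Lemma lextD p q : lext (p + q) = lext p + lext q.
Proof.
pose w := maxn (msize p) (msize q).
have hp : (msize p <= w)%N by rewrite leq_maxl.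
have hq : (msize q <= w)%N by rewrite leq_maxr.
have hpq : (msize (p + q) <= w)%N by apply: leq_trans (msizeD_le _ _) _.
rewrite !(lextE hp, lextE hq, lextE hpq) -big_split /=.
by apply: eq_bigr => d _; rewrite mcoeffD scalerDl.
Qed.

Lemma lextZ c p : lext (c *: p) = c *: lext p.
Proof.
have hp : (msize p <= msize p)%N by [].
have hcp : (msize (c *: p) <= msize p)%N by apply: msizeZ_le.
rewrite (lextE hp) (lextE hcp) scaler_sumr.
by apply: eq_bigr => d _; rewrite mcoeffZ scalerA.
Qed.

Lemma lext0 : lext 0 = 0.
Proof. by rewrite /lext msupp0 big_nil. Qed.

Lemma lextX d : lext 'X_[d] = g d.
Proof. by rewrite /lext msuppX big_seq1 mcoeffX eqxx scale1r. Qed.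

Lemma lextB p q : lext (p - q) = lext p - lext q.
Proof. by rewrite lextD; congr (_ + _); rewrite -(scaleN1r q) lextZ scaleN1r. Qed.

Lemma lext_sum (I : Type) (s : seq I) (F : I -> {mpoly K[m]}) :
  lext (\sum_(i <- s) F i) = \sum_(i <- s) lext (F i).
Proof.
elim: s => [|a s IH]; first by rewrite !big_nil lext0.
by rewrite !big_cons lextD IH.
Qed.
End Lext.
Section DS.
Variable E : finType.

Definition sw (W : {set E}) (x y : E) : {set E} := (W :\ x) :|: [set y].

Lemma in_sw W x y e : (e \in sw W x y) = ((e != x) && (e \in W)) || (e == y).
Proof. by rewrite !inE. Qed.

Lemma cnt_sw (W1 W2 : {set E}) x y e :
  x \in W1 -> x \notin W2 -> y \in W2 -> y \notin W1 ->
  ((e \in sw W1 x y) + (e \in sw W2 y x) = (e \in W1) + (e \in W2))%N.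
Proof.
move=> x1 x2 y1 y2; rewrite !in_sw.
have nxy : x != y by apply: contraNneq y2 => <-.
case: (eqVneq e x) => [->|nex]; first by rewrite (negbTE nxy) x1 (negbTE x2).
case: (eqVneq e y) => [->|ney]; first by rewrite y1 (negbTE y2).
by rewrite /= !orbF.
Qed.

Lemma ds_sw (W1 W2 : {set E}) x y :
  x \in W1 -> x \notin W2 -> y \in W2 -> y \notin W1 ->
  double_swap W1 W2 (sw W1 x y) (sw W2 y x).
Proof.
move=> x1 x2 y1 y2.
have nxy : x != y by apply: contraNneq y2 => <-.
exists x, y; split.
- by rewrite /ivec x1 (negbTE x2).
- by rewrite /ivec y1 (negbTE y2).
- move=> e; rewrite /ivec /eps in_sw.
  case: (eqVneq e x) => [->|nex]; first by rewrite (negbTE nxy) x1 /= addr0 subrr.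
  case: (eqVneq e y) => [->|ney]; first by rewrite (negbTE y2) orbT /= add0r subr0.
  by rewrite /= !orbF addr0 subr0.
- move=> e; rewrite /ivec /eps in_sw.
  case: (eqVneq e y) => [->|ney].
    by rewrite eq_sym (negbTE nxy) y1 /= addr0 subrr.
  case: (eqVneq e x) => [->|nex]; first by rewrite (negbTE x2) orbT /= add0r subr0.
  by rewrite /= !orbF addr0 subr0.
Qed.

Lemma ds_sets (U1 U2 V1 V2 : {set E}) : double_swap U1 U2 V1 V2 ->
  exists i j, [/\ i \in U1, i \notin U2, j \in U2 & j \notin U1] /\
     V1 = sw U1 i j /\ V2 = sw U2 j i.
Proof.
move=> [i [j [Hi Hj H1 H2]]].
have [i1 i2] : i \in U1 /\ i \notin U2.
  by move: Hi; rewrite /ivec ltz_nat; case: (i \in U1); case: (i \in U2).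
have [j2 j1] : j \in U2 /\ j \notin U1.
  by move: Hj; rewrite /ivec ltz_nat; case: (j \in U1); case: (j \in U2).
have nij : i != j by apply: contraNneq j1 => <-.
exists i, j; split; first by []; split.
- apply/setP => e; move: (H1 e); rewrite /ivec /eps in_sw.
  case: (eqVneq e i) => [->|nei].
    rewrite (negbTE nij) i1 /= addr0 subrr.
    by case: (i \in V1).
  case: (eqVneq e j) => [->|nej].
    rewrite (negbTE j1) /= add0r subr0.
    by case: (j \in V1).
  rewrite /= !orbF addr0 subr0.
  by case: (e \in V1); case: (e \in U1).
- apply/setP => e; move: (H2 e); rewrite /ivec /eps in_sw.
  case: (eqVneq e j) => [->|nej].
    rewrite eq_sym (negbTE nij) j2 /= addr0 subrr.
    by case: (j \in V2).
  case: (eqVneq e i) => [->|nei].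
    rewrite (negbTE i2) /= add0r subr0.
    by case: (i \in V2).
  rewrite /= !orbF addr0 subr0.
  by case: (e \in V2); case: (e \in U2).
Qed.

Lemma sw_back (U : {set E}) i j : i \in U -> j \notin U -> sw (sw U i j) j i = U.
Proof.
move=> iU jU; have nij : i != j by apply: contraNneq jU => <-.
apply/setP => e; rewrite !in_sw.
case: (eqVneq e i) => [->|nei]; first by rewrite ?eqxx ?orbT iU.
case: (eqVneq e j) => [->|nej]; first by rewrite /= (negbTE jU).
by rewrite /= !orbF.
Qed.

Lemma ds_sym (U1 U2 V1 V2 : {set E}) :
  double_swap U1 U2 V1 V2 -> double_swap V1 V2 U1 U2.
Proof.
move=> /ds_sets [i [j [[i1 i2 j2 j1] [-> ->]]]].
have nij : i != j by apply: contraNneq j1 => <-.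
rewrite -{2}(sw_back i1 j1) -{2}(sw_back j2 i2).
by apply: ds_sw; rewrite !in_sw ?eqxx ?orbT //= ?(negbTE nij) // eq_sym (negbTE nij).
Qed.

Lemma ds_toric (K : fieldType) (U1 U2 V1 V2 : {set E}) :
  double_swap U1 U2 V1 V2 ->
  xmon K U1 * xmon K U2 = xmon K V1 * xmon K V2.
Proof.
move=> /ds_sets [i [j [[i1 i2 j2 j1] [-> ->]]]].
rewrite /xmon -!big_split /=; apply: eq_bigr => e _.
by rewrite -!exprD cnt_sw.
Qed.
End DS.
Lemma iter_mulX (R : comNzRingType) (x : R) n : iter n ( *%R x) 1 = x ^+ n.
Proof. by elim: n => //= n ->; rewrite exprS. Qed.

Section Gen.
Variables (E : finType) (K : fieldType) (B : {set {set E}}).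
Local Notation T := (basisT B).
Local Notation S := (SP K B).
Local Notation Nt := #|{: T}|.

Definition Pm (s : seq T) : S := \prod_(w <- s) yvar K w.
Definition cnt (s : seq T) (e : E) : nat := count (fun w : T => e \in val w) s.

Lemma Pm_cons w s : Pm (w :: s) = yvar K w * Pm s.
Proof. by rewrite /Pm big_cons. Qed.

Lemma Pm_perm s1 s2 : perm_eq s1 s2 -> Pm s1 = Pm s2.
Proof. by move=> H; rewrite /Pm (perm_big _ H). Qed.

Lemma cnt_cons w s e : cnt (w :: s) e = ((e \in val w) + cnt s e)%N.
Proof. by []. Qed.

Lemma cnt_perm s1 s2 : perm_eq s1 s2 -> cnt s1 =1 cnt s2.
Proof. by move=> H e; rewrite /cnt (permP H). Qed.

Lemma toric_yvar (u : T) : toric_map (yvar K u) = xmon K (val u).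
Proof. by rewrite /toric_map /yvar comp_mpolyXU -tnth_nth tnth_mktuple enum_rankK. Qed.

Lemma toric_Pm s : toric_map (Pm s) = \prod_(e : E) xvar K e ^+ cnt s e.
Proof.
have -> : toric_map (Pm s) = \prod_(w <- s) toric_map (yvar K w).
  by rewrite /toric_map /Pm rmorph_prod.
under eq_bigr do rewrite toric_yvar.
rewrite /xmon exchange_big /=; apply: eq_bigr => e _.
by rewrite prodrXr /cnt -sumn_count sumnE big_map.
Qed.

Definition cv (s : seq T) : 'X_{1..#|{: E}|} :=
  [multinom cnt s (enum_val j) | j < #|{: E}|].

Lemma toric_Pm_X s : toric_map (Pm s) = 'X_[cv s].
Proof.
rewrite toric_Pm mpolyXE_id (reindex (@enum_rank E)) /=; last first.
  by exists (@enum_val E predT) => x _; rewrite ?enum_rankK ?enum_valK.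
by apply: eq_bigr => e _; rewrite mnmE enum_rankK.
Qed.

Lemma cnt_of_toric s1 s2 :
  toric_map (Pm s1) = toric_map (Pm s2) -> cnt s1 =1 cnt s2.
Proof.
rewrite !toric_Pm_X => H e.
have Hcv : cv s1 = cv s2.
  move/(congr1 (mcoeff (cv s1))): H; rewrite !mcoeffX eqxx.
  by case: eqP => // _ /eqP; rewrite /= mulr1n mulr0n oner_eq0.
by have := congr1 (fun m : 'X_{1..#|{: E}|} => m (enum_rank e)) Hcv; rewrite /= !mnmE !enum_rankK.
Qed.

Lemma toric_of_cnt s1 s2 :
  cnt s1 =1 cnt s2 -> toric_map (Pm s1) = toric_map (Pm s2).
Proof. by move=> H; rewrite !toric_Pm; apply: eq_bigr => e _; rewrite H. Qed.

Definition sq (m : 'X_{1..Nt}) : seq T :=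
  flatten [seq nseq (m i) (enum_val i) | i <- enum 'I_Nt].

Lemma Xm_Pm (m : 'X_{1..Nt}) : 'X_[m] = Pm (sq m).
Proof.
rewrite /Pm /sq big_flatten big_map mpolyXE_id big_enum /=.
by apply: eq_big => // i _; rewrite big_nseq iter_mulX /yvar enum_valK.
Qed.

Lemma count_sq (m : 'X_{1..Nt}) (x : T) : count_mem x (sq m) = m (enum_rank x).
Proof.
rewrite /sq count_flatten sumnE !big_map -enumT big_enum /=.
rewrite (bigD1 (enum_rank x)) //= count_nseq enum_rankK.
have -> : pred1 x x = true by rewrite /= eqxx.
rewrite mul1n.
rewrite big1 ?addn0 // => i ne; rewrite count_nseq /=.
case: eqP => [Hx|]; last by rewrite mul0n.
by move: ne; rewrite -Hx enum_valK eqxx.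
Qed.

Definition mon (s : seq T) : 'X_{1..Nt} := (\sum_(u <- s) U_(enum_rank u))%MM.

Lemma Pm_mon s : Pm s = 'X_[mon s].
Proof.
elim: s => [|u s IH]; first by rewrite /Pm /mon !big_nil mpolyX0.
by rewrite Pm_cons IH /mon big_cons mpolyXD.
Qed.

Lemma sq_mon s : perm_eq (sq (mon s)) s.
Proof.
rewrite /perm_eq; apply/allP => x _; apply/eqP; rewrite /= count_sq /mon mnm_sumE.
rewrite -sumn_count sumnE big_map; apply: eq_bigr => u _.
by rewrite mnm1E (inj_eq enum_rank_inj).
Qed.

Lemma toricM (p q : S) : toric_map (p * q) = toric_map p * toric_map q.
Proof. by rewrite /toric_map rmorphM. Qed.
Lemma toricZ c (p : S) : toric_map (c *: p) = c *: toric_map p.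
Proof. by rewrite /toric_map comp_mpolyZ. Qed.
Lemma toricB (p q : S) : toric_map (p - q) = toric_map p - toric_map q.
Proof. by rewrite /toric_map rmorphB. Qed.
Lemma toric_sum (I : Type) (r : seq I) (F : I -> S) :
  toric_map (\sum_(i <- r) F i) = \sum_(i <- r) toric_map (F i).
Proof. by rewrite /toric_map raddf_sum. Qed.

Lemma ideal_toric (p : S) :
  in_ideal_gen (@double_swap_binomial E K B) p -> toric_map p = 0.
Proof.
move=> [s [Hs ->]]; rewrite toric_sum big1_seq // => x /andP [_ Hx].
have [u1 [u2 [v1 [v2 [Hd ->]]]]] := Hs x Hx.
by rewrite toricM toricB !toricM !toric_yvar (ds_toric K Hd) subrr mulr0.
Qed.
End Gen.
Lemma sum_bool1 m (P : 'I_m -> bool) (b : bool) :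
  (\sum_(j < m) (P j : nat) == b)%N <->
  (forall a c, P a -> P c -> a = c) /\ ((exists a, P a) <-> b).
Proof.
have S1 : forall a, P a -> (\sum_(j < m) (P j : nat) = 1 + \sum_(j < m | j != a) P j)%N.
  by move=> a Pa; rewrite (bigD1 a) //= Pa.
have S0 : (forall j, ~~ P j) -> (\sum_(j < m) (P j : nat) = 0)%N.
  by move=> H; rewrite big1 // => j _; rewrite (negbTE (H j)).
split.
- move=> /eqP Hs.
  have U : forall a c, P a -> P c -> a = c.
    move=> a c Pa Pc; apply/eqP; apply: contraT => nac.
    move: Hs; rewrite (S1 a Pa) (bigD1 c) /=; last by rewrite eq_sym.
    by rewrite Pc; case: b.
  split => //; split.
  + by move=> [a Pa]; move: Hs; rewrite (S1 a Pa); case: b.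
  + move=> Hb; case: (pickP P) => [a Pa|H0]; first by exists a.
    by move: Hs; rewrite S0 ?Hb // => j; rewrite H0.
- move=> [U H2]; apply/eqP; case: b H2 => H2.
  + have [a Pa] := (proj2 H2 isT); rewrite (S1 a Pa) big1 // => j nja.
    by case: (boolP (P j)) => // Pj; move: nja; rewrite (U _ _ Pj Pa) eqxx.
  + by rewrite S0 // => j; apply/negP => Pj; have := proj1 H2 (ex_intro _ j Pj).
Qed.

Section Alpha.
Variables (K : fieldType) (n : nat) (k : 'I_n -> nat) (B : {set {set 'I_n}}).
Local Notation EA := (alphaE k).
Local Notation BA := (alpha_bases k B).
Local Notation TA := (basisT BA).
Local Notation TM := (basisT B).

Definition tg (i : 'I_n) (a : 'I_(k i)) : EA := Tagged (fun i0 => 'I_(k i0)) a.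

Lemma tg_eq i (c a : 'I_(k i)) : (tg c == tg a) = (c == a).
Proof. by rewrite eq_Tagged. Qed.

Lemma tg_neq i j (c : 'I_(k i)) (a : 'I_(k j)) : i != j -> (tg c == tg a) = false.
Proof.
move=> nij; apply/negbTE; apply: contra nij => /eqP H.
by rewrite -[i]/(tag (tg c)) H.
Qed.

Definition ok (W : {set EA}) (U : {set 'I_n}) : Prop :=
  forall i, (forall a b : 'I_(k i), tg a \in W -> tg b \in W -> a = b) /\
            ((exists a : 'I_(k i), tg a \in W) <-> i \in U).

Lemma inBA W : W \in BA <-> exists2 U, U \in B & ok W U.
Proof.
rewrite inE; split.
- move=> /existsP [U /andP [UB /forallP H]]; exists U => // i.
  exact/sum_bool1/H.
- move=> [U UB H]; apply/existsP; exists U; rewrite UB /=; apply/forallP => i.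
  exact/sum_bool1/H.
Qed.

Definition proj (W : {set EA}) : {set 'I_n} :=
  [set i | [exists a : 'I_(k i), tg a \in W]].

Lemma ok_proj W U : ok W U -> proj W = U.
Proof.
move=> H; apply/setP => i; rewrite inE; apply/idP/idP.
- by move=> /existsP; apply: (proj2 (H i)).1.
- by move=> /(proj2 (H i)).2 /existsP.
Qed.

Lemma pr_in (w : TA) : proj (val w) \in B.
Proof. by have [U UB Hok] := (inBA (val w)).1 (valP w); rewrite (ok_proj Hok). Qed.

Definition pr (w : TA) : TM := exist (fun U => U \in B) (proj (val w)) (pr_in w).

Lemma ok_w (w : TA) : ok (val w) (val (pr w)).
Proof. by have [U UB Hok] := (inBA (val w)).1 (valP w); rewrite /= (ok_proj Hok). Qed.

Lemma ok_sw W U i j (a : 'I_(k i)) (b : 'I_(k j)) :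
  ok W U -> tg a \in W -> (j = i \/ j \notin U) -> ok (sw W (tg a) (tg b)) (sw U i j).
Proof.
move=> H aW Hj i'.
have Hone : forall (c : 'I_(k i')),
    (forall d : 'I_(k i'), (tg d \in sw W (tg a) (tg b)) = (d == c)) ->
    i' \in sw U i j ->
    (forall a0 b0 : 'I_(k i'), tg a0 \in sw W (tg a) (tg b) ->
        tg b0 \in sw W (tg a) (tg b) -> a0 = b0) /\
    ((exists a0 : 'I_(k i'), tg a0 \in sw W (tg a) (tg b)) <-> i' \in sw U i j).
  move=> c Hc Hi; split; first by move=> a0 b0; rewrite !Hc => /eqP -> /eqP ->.
  by split => // _; exists c; rewrite Hc.
have Hzero : (forall d : 'I_(k i'), (tg d \in sw W (tg a) (tg b)) = false) ->
    i' \notin sw U i j ->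
    (forall a0 b0 : 'I_(k i'), tg a0 \in sw W (tg a) (tg b) ->
        tg b0 \in sw W (tg a) (tg b) -> a0 = b0) /\
    ((exists a0 : 'I_(k i'), tg a0 \in sw W (tg a) (tg b)) <-> i' \in sw U i j).
  move=> Hc Hi; split; first by move=> a0 b0; rewrite !Hc.
  by split => [[d]|]; rewrite ?Hc // (negbTE Hi).
have iU : i \in U by apply: (proj2 (H i)).1; exists a.
case: (eqVneq i' i) => [Ei|ni].
- subst i'; case: (eqVneq j i) => [Ej|nj].
  + subst j; apply: (Hone b); last by rewrite in_sw eqxx orbT.
    move=> d; rewrite in_sw !tg_eq.
    case: (eqVneq d a) => [->|nda] /=; first by rewrite ?orbF.
    by case: (boolP (tg d \in W)) => // dW; case/negP: nda; apply/eqP; apply: (proj1 (H i)).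
  + apply: Hzero; last by rewrite in_sw eqxx /= eq_sym (negbTE nj).
    have nij : i != j by rewrite eq_sym.
    move=> d; rewrite in_sw tg_eq (tg_neq _ _ nij).
    case: (eqVneq d a) => [->|nda] /=; first by rewrite ?orbF.
    rewrite ?orbF; apply/negbTE/negP => dW; case/negP: nda; apply/eqP.
    exact: (proj1 (H i)).
- case: (eqVneq i' j) => [Ej|nj].
  + subst i'; have jU : j \notin U by case: Hj => // Ej; case/eqP: ni.
    apply: (Hone b); last by rewrite in_sw eqxx orbT.
    move=> d; rewrite in_sw tg_eq (tg_neq _ _ ni) /=.
    case: (boolP (tg d \in W)) => //= dW; case/negP: jU.
    by apply: (proj2 (H j)).1; exists d.
  + have E1 : forall d : 'I_(k i'), (tg d \in sw W (tg a) (tg b)) = (tg d \in W).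
      by move=> d; rewrite in_sw (tg_neq _ _ ni) (tg_neq _ _ nj) /= orbF.
    have E2 : (i' \in sw U i j) = (i' \in U) by rewrite in_sw ni (negbTE nj) /= orbF.
    split; first by move=> a0 b0; rewrite !E1; apply: (proj1 (H i')).
    rewrite E2 -(proj2 (H i')); split; move=> [d]; exists d; by rewrite ?E1 // -E1.
Qed.

Lemma sw_same (U : {set 'I_n}) i : i \in U -> sw U i i = U.
Proof.
move=> iU; apply/setP => e; rewrite in_sw.
by case: (eqVneq e i) => [->|]; rewrite ?iU ?orbT //= orbF.
Qed.

Lemma swTA (w1 w2 : TA) i j (a : 'I_(k i)) (b : 'I_(k j)) :
  tg a \in val w1 -> tg a \notin val w2 -> tg b \in val w2 -> tg b \notin val w1 ->
  (j = i \/ j \notin val (pr w1)) -> (i = j \/ i \notin val (pr w2)) ->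
  sw (val (pr w1)) i j \in B -> sw (val (pr w2)) j i \in B ->
  exists v1 v2 : TA, [/\ val v1 = sw (val w1) (tg a) (tg b),
     val v2 = sw (val w2) (tg b) (tg a),
     val (pr v1) = sw (val (pr w1)) i j,
     val (pr v2) = sw (val (pr w2)) j i &
     cnt [:: v1; v2] =1 cnt [:: w1; w2]].
Proof.
move=> a1 a2 b2 b1 Hj Hi B1 B2.
have ok1 := ok_sw b (ok_w w1) a1 Hj.
have ok2 := ok_sw a (ok_w w2) b2 Hi.
have in1 : sw (val w1) (tg a) (tg b) \in BA by apply/inBA; exists (sw (val (pr w1)) i j).
have in2 : sw (val w2) (tg b) (tg a) \in BA by apply/inBA; exists (sw (val (pr w2)) j i).
exists (exist (fun W => W \in BA) _ in1), (exist (fun W => W \in BA) _ in2); split => /=.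
- by [].
- by [].
- exact: ok_proj ok1.
- exact: ok_proj ok2.
- by move=> e; rewrite /cnt /= !addn0 (cnt_sw e a1 a2 b2 b1).
Qed.

Local Notation N := (in_ideal_gen (@double_swap_binomial EA K BA)).

Definition eN (p q : SP K BA) := N (p - q).

Lemma eN_refl p : eN p p.
Proof. exact: Nrefl. Qed.

Lemma eN_sym p q : eN p q -> eN q p.
Proof. by rewrite /eN => H; rewrite -opprB; apply: NN. Qed.

Lemma eN_trans p q r : eN p q -> eN q r -> eN p r.
Proof.
rewrite /eN => H1 H2; have -> : p - r = (p - q) + (q - r) by rewrite addrA subrK.
exact: ND.
Qed.

Lemma Ngen p : double_swap_binomial p -> N p.
Proof.
move=> H; exists [:: (1, p)]; split; last by rewrite big_seq1 mul1r.
by move=> x; rewrite inE => /eqP ->.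
Qed.

Definition cg (s1 s2 : seq TA) := eN (Pm K s1) (Pm K s2).

Lemma cg_perm s1 s2 : perm_eq s1 s2 -> cg s1 s2.
Proof. by move=> H; rewrite /cg (Pm_perm K H); apply: eN_refl. Qed.

Lemma cg_cons w s1 s2 : cg s1 s2 -> cg (w :: s1) (w :: s2).
Proof. by rewrite /cg /eN !Pm_cons -mulrBr; apply: NM. Qed.

Lemma cg_ds (w1 w2 v1 v2 : TA) t :
  double_swap (val w1) (val w2) (val v1) (val v2) ->
  cg (w1 :: w2 :: t) (v1 :: v2 :: t).
Proof.
move=> H; rewrite /cg /eN !Pm_cons !mulrA -mulrBl mulrC; apply: NM.
by apply: Ngen; exists w1, w2, v1, v2.
Qed.

Lemma cnt_cat (s t : seq TA) e : cnt (s ++ t) e = (cnt s e + cnt t e)%N.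
Proof. by rewrite /cnt count_cat. Qed.

Lemma sub_eq (w w' : TA) : pr w' = pr w -> val w' :\: val w = set0 -> w' = w.
Proof.
move=> Hp H0.
have sub : forall e, e \in val w' -> e \in val w.
  move=> e ew'; apply: contraT => ew.
  have : e \in val w' :\: val w by rewrite inE ew ew'.
  by rewrite H0 inE.
apply: val_inj; apply/setP => -[i c]; apply/idP/idP; first exact: sub.
change (tg c \in val w -> tg c \in val w') => cw.
have : i \in val (pr w') by rewrite Hp; apply: (proj2 (ok_w w i)).1; exists c.
move=> /(proj2 (ok_w w' i)).2 [c' cw'].
by rewrite -((proj1 (ok_w w i)) _ _ (sub _ cw') cw).
Qed.

Lemma stepF (w w' : TA) (s2 : seq TA) (x : EA) :
  x \in val w' :\: val w -> pr w' = pr w ->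
  (forall e, e \in val w -> 0 < cnt (w' :: s2) e)%N ->
  exists v1 v2 r, [/\ cg (w' :: s2) (v1 :: v2 :: r),
    perm_eq (map pr (w' :: s2)) (map pr (v1 :: v2 :: r)),
    cnt (w' :: s2) =1 cnt (v1 :: v2 :: r),
    pr v1 = pr w & val v1 :\: val w \proper val w' :\: val w].
Proof.
move: x => [i b] Hx Hp Hc.
have Hx' : tg b \in val w' :\: val w by [].
move: Hx'; rewrite inE => /andP [bw bw'].
have iU : i \in val (pr w) by rewrite -Hp; apply: (proj2 (ok_w w' i)).1; exists b.
have [a aw] := (proj2 (ok_w w i)).2 iU.
have nab : a != b by apply: contraNneq bw => <-.
have aw' : tg a \notin val w'.
  by apply: contra nab => aw'; apply/eqP; apply: (proj1 (ok_w w' i)).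
have : (0 < cnt s2 (tg a))%N by move: (Hc _ aw); rewrite cnt_cons (negbTE aw').
rewrite /cnt -has_count => /hasP [w'' w''s aw''].
have bw'' : tg b \notin val w''.
  by apply: contra nab => bw''; apply/eqP; apply: (proj1 (ok_w w'' i)).
have iU' : i \in val (pr w') by rewrite Hp.
have iU'' : i \in val (pr w'') by apply: (proj2 (ok_w w'' i)).1; exists a.
have B1 : sw (val (pr w')) i i \in B by rewrite sw_same //; exact: (valP (pr w')).
have B2 : sw (val (pr w'')) i i \in B by rewrite sw_same //; exact: (valP (pr w'')).
have [v1 [v2 [Ev1 Ev2 Hv1 Hv2 Hcnt]]] :=
  swTA bw' bw'' aw'' aw' (or_introl erefl) (or_introl erefl) B1 B2.
have Hds : double_swap (val w') (val w'') (val v1) (val v2).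
  by rewrite Ev1 Ev2; apply: ds_sw.
have pv1 : pr v1 = pr w' by apply: val_inj; rewrite Hv1 sw_same.
have pv2 : pr v2 = pr w'' by apply: val_inj; rewrite Hv2 sw_same.
pose r := rem w'' s2.
have Hs2 : perm_eq (w' :: s2) (w' :: w'' :: r) by rewrite perm_cons perm_to_rem.
exists v1, v2, r; split.
- exact: eN_trans (cg_perm Hs2) (cg_ds _ Hds).
- by apply: perm_trans (perm_map pr Hs2) _; rewrite /= pv1 pv2.
- move=> e; change (cnt (w' :: s2) e = cnt (v1 :: v2 :: r) e); rewrite (cnt_perm Hs2 e).
  rewrite -[w' :: w'' :: r]/([:: w'; w''] ++ r) -[v1 :: v2 :: r]/([:: v1; v2] ++ r).
  by rewrite !cnt_cat Hcnt.
- by rewrite pv1.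
- apply/properP; split.
    apply/subsetP => e; rewrite !inE Ev1 in_sw => /andP [ew].
    rewrite ew /=; case/orP => [/andP [_ ->] //|/eqP Ee].
    by move: ew; rewrite Ee aw.
  exists (tg b); first by rewrite inE bw bw'.
  by rewrite inE Ev1 in_sw eqxx /= tg_eq eq_sym (negbTE nab) andbF.
Qed.

Lemma moveF d : forall (w w' : TA) (s2 : seq TA),
  (#|val w' :\: val w| <= d)%N -> pr w' = pr w ->
  (forall e, e \in val w -> 0 < cnt (w' :: s2) e)%N ->
  exists t, [/\ cg (w' :: s2) (w :: t),
    perm_eq (map pr (w' :: s2)) (map pr (w :: t)) &
    cnt (w' :: s2) =1 cnt (w :: t)].
Proof.
elim: d => [|d IH] w w' s2 Hd Hp Hc.
  case: (eqVneq (val w' :\: val w) set0) => [E0|NE].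
    by rewrite (sub_eq Hp E0); exists s2; split => //; apply: eN_refl.
  by move: Hd; rewrite leqn0 cards_eq0 (negbTE NE).
case: (eqVneq (val w' :\: val w) set0) => [E0|NE].
  by rewrite (sub_eq Hp E0); exists s2; split => //; apply: eN_refl.
have [x Hx] := set0Pn _ NE.
have [v1 [v2 [r [H1 H2 H3 H4 H5]]]] := stepF Hx Hp Hc.
have Hd' : (#|val v1 :\: val w| <= d)%N.
  by rewrite -ltnS; apply: leq_trans (proper_card H5) Hd.
have Hc' : forall e, e \in val w -> (0 < cnt (v1 :: v2 :: r) e)%N.
  by move=> e ew; rewrite -H3; apply: Hc.
have [t [T1 T2 T3]] := IH w v1 (v2 :: r) Hd' H4 Hc'.
exists t; split.
- exact: eN_trans H1 T1.
- exact: perm_trans H2 T2.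
- by move=> e; rewrite H3 T3.
Qed.

Lemma congC (s1 s2 : seq TA) :
  perm_eq (map pr s1) (map pr s2) -> cnt s1 =1 cnt s2 -> cg s1 s2.
Proof.
elim: s1 s2 => [|w s1 IH] s2 Hp Hc.
  by move: (perm_size Hp); rewrite size_map; case: s2 {Hp Hc} => // _; apply: eN_refl.
have : pr w \in map pr s2 by rewrite -(perm_mem Hp) inE eqxx.
move=> /mapP [w' w's Ew].
pose r := rem w' s2.
have Hs2 : perm_eq s2 (w' :: r) by rewrite perm_to_rem.
have Hc' : forall e, e \in val w -> (0 < cnt (w' :: r) e)%N.
  by move=> e ew; rewrite -(cnt_perm Hs2) -Hc cnt_cons ew.
have [t [T1 T2 T3]] := moveF (leqnn _) (esym Ew) Hc'.
have P1 : perm_eq (map pr s1) (map pr t).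
  have := perm_trans Hp (perm_trans (perm_map pr Hs2) T2).
  by rewrite /= perm_cons.
have C1 : cnt s1 =1 cnt t.
  move=> e; have := Hc e; rewrite (cnt_perm Hs2) T3 !cnt_cons.
  by move/addnI.
apply: eN_trans (cg_cons w (IH t P1 C1)) _.
apply: eN_trans (eN_sym T1) _.
by apply: cg_perm; rewrite perm_sym.
Qed.

Definition liftP (D : EA -> nat) (u : seq TM) (s : seq TA) : Prop :=
  perm_eq (map pr s) u /\ cnt s =1 D.

Definition liftD (D : EA -> nat) (u : seq TM) : SP K BA :=
  match excluded_middle_informative (exists s, liftP D u s) with
  | left _ => Pm K (epsilon (inhabits [::]) (liftP D u))
  | right _ => 0
  end.

Lemma liftD_spec D u :
  (exists2 s, liftP D u s & liftD D u = Pm K s) \/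
  ((~ exists s, liftP D u s) /\ liftD D u = 0).
Proof.
rewrite /liftD; case: excluded_middle_informative => H; last by right.
by left; exists (epsilon (inhabits [::]) (liftP D u)) => //; apply: epsilon_spec.
Qed.

Lemma liftP_perm D u1 u2 s : perm_eq u1 u2 -> liftP D u1 s -> liftP D u2 s.
Proof. by move=> Hu [H1 H2]; split => //; apply: perm_trans H1 Hu. Qed.

Lemma liftP_cg D u s1 s2 : liftP D u s1 -> liftP D u s2 -> cg s1 s2.
Proof.
move=> [H1 C1] [H2 C2]; apply: congC; last by move=> e; rewrite C1 C2.
by apply: perm_trans H1 _; rewrite perm_sym.
Qed.

Lemma liftD_perm D u1 u2 : perm_eq u1 u2 -> eN (liftD D u1) (liftD D u2).
Proof.
move=> Hu; have Hu' : perm_eq u2 u1 by rewrite perm_sym.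
case: (liftD_spec D u1) => [[s1 H1 ->]|[N1 ->]];
  case: (liftD_spec D u2) => [[s2 H2 ->]|[N2 ->]].
- exact: liftP_cg (liftP_perm Hu H1) H2.
- by case: N2; exists s1; apply: liftP_perm Hu H1.
- by case: N1; exists s2; apply: liftP_perm Hu' H2.
- exact: eN_refl.
Qed.

Lemma lift_step D (u1 u2 v1 v2 : TM) t s :
  double_swap (val u1) (val u2) (val v1) (val v2) ->
  liftP D [:: u1, u2 & t] s -> exists2 s', liftP D [:: v1, v2 & t] s' & cg s s'.
Proof.
move=> Hds [Hp Hc].
have [w1 w1s Ew1] : exists2 w1, w1 \in s & pr w1 = u1.
  have : u1 \in map pr s by rewrite (perm_mem Hp) inE eqxx.
  by move=> /mapP [w1 ? ->]; exists w1.
pose r1 := rem w1 s.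
have Hs1 : perm_eq s (w1 :: r1) by rewrite perm_to_rem.
have Hp1 : perm_eq (map pr r1) (u2 :: t).
  have : perm_eq (map pr (w1 :: r1)) [:: u1, u2 & t].
    by apply: (perm_trans _ Hp); apply: perm_map; rewrite perm_sym.
  by rewrite /= Ew1 perm_cons.
have [w2 w2s Ew2] : exists2 w2, w2 \in r1 & pr w2 = u2.
  have : u2 \in map pr r1 by rewrite (perm_mem Hp1) inE eqxx.
  by move=> /mapP [w2 ? ->]; exists w2.
pose r := rem w2 r1.
have Hs : perm_eq s [:: w1, w2 & r].
  by apply: (perm_trans Hs1); rewrite perm_cons perm_to_rem.
have Hpr : perm_eq (map pr r) t.
  have : perm_eq (map pr (w2 :: r)) (u2 :: t).
    by apply: (perm_trans _ Hp1); apply: perm_map; rewrite perm_sym perm_to_rem.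
  by rewrite /= Ew2 perm_cons.
have [i [j [[i1 i2 j2 j1] [Ev1 Ev2]]]] := ds_sets Hds.
have [a a1] : exists a : 'I_(k i), tg a \in val w1.
  by apply: (proj2 (ok_w w1 i)).2; rewrite Ew1.
have [b b2] : exists b : 'I_(k j), tg b \in val w2.
  by apply: (proj2 (ok_w w2 j)).2; rewrite Ew2.
have a2 : tg a \notin val w2.
  by apply: contra i2 => aw2; rewrite -Ew2; apply: (proj2 (ok_w w2 i)).1; exists a.
have b1 : tg b \notin val w1.
  by apply: contra j1 => bw1; rewrite -Ew1; apply: (proj2 (ok_w w1 j)).1; exists b.
have B1 : sw (val (pr w1)) i j \in B by rewrite Ew1 -Ev1; exact: (valP v1).
have B2 : sw (val (pr w2)) j i \in B by rewrite Ew2 -Ev2; exact: (valP v2).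
have Hj : j = i \/ j \notin val (pr w1) by right; rewrite Ew1.
have Hi : i = j \/ i \notin val (pr w2) by right; rewrite Ew2.
have [v1' [v2' [Ev1' Ev2' Hv1 Hv2 Hcnt]]] := swTA a1 a2 b2 b1 Hj Hi B1 B2.
have pv1 : pr v1' = v1 by apply: val_inj; rewrite Hv1 Ew1 -Ev1.
have pv2 : pr v2' = v2 by apply: val_inj; rewrite Hv2 Ew2 -Ev2.
have Hds' : double_swap (val w1) (val w2) (val v1') (val v2').
  by rewrite Ev1' Ev2'; apply: ds_sw.
exists [:: v1', v2' & r]; last exact: eN_trans (cg_perm Hs) (cg_ds r Hds').
split; first by rewrite /= pv1 pv2 !perm_cons.
move=> e; change (cnt ([:: v1'; v2'] ++ r) e = D e).
rewrite cnt_cat Hcnt -cnt_cat -Hc.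
by apply/esym/cnt_perm.
Qed.

Lemma liftD_ds D (u1 u2 v1 v2 : TM) t :
  double_swap (val u1) (val u2) (val v1) (val v2) ->
  eN (liftD D [:: u1, u2 & t]) (liftD D [:: v1, v2 & t]).
Proof.
move=> Hds.
case: (liftD_spec D [:: u1, u2 & t]) => [[s1 H1 ->]|[N1 ->]];
  case: (liftD_spec D [:: v1, v2 & t]) => [[s2 H2 ->]|[N2 ->]].
- have [s' H' Hc] := lift_step Hds H1.
  exact: eN_trans Hc (liftP_cg H' H2).
- by have [s' H' _] := lift_step Hds H1; case: N2; exists s'.
- by have [s' H' _] := lift_step (ds_sym Hds) H2; case: N1; exists s'.
- exact: eN_refl.
Qed.

Definition LD (D : EA -> nat) (p : SP K B) : SP K BA :=
  lext (fun m => liftD D (@sq _ B m)) p.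

Lemma LD_Pm D s : eN (LD D (Pm K s)) (liftD D s).
Proof. by rewrite /LD Pm_mon lextX; apply: liftD_perm; apply: sq_mon. Qed.

Lemma LD_ideal D q : in_ideal_gen (@double_swap_binomial 'I_n K B) q -> N (LD D q).
Proof.
move=> [s [Hs ->]]; rewrite /LD lext_sum; apply: Nsum => x Hx.
have [u1 [u2 [v1 [v2 [Hds Ex]]]]] := Hs x Hx.
rewrite Ex [x.1]mpolyE mulr_suml lext_sum; apply: Nsum => m _.
rewrite -scalerAl lextZ; apply: NZ.
have E (a b P : SP K B) : P * (a * b) = a * (b * P) by rewrite mulrC -mulrA.
rewrite (Xm_Pm K) mulrBr (E (yvar K u1)) (E (yvar K v1)) -!Pm_cons lextB.
apply: eN_trans (LD_Pm D _) _; apply: eN_trans (liftD_ds D _ Hds) _.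
exact: eN_sym (LD_Pm D _).
Qed.

Lemma cnt_proj (s : seq TA) i : cnt (map pr s) i = (\sum_(a < k i) cnt s (tg a))%N.
Proof.
elim: s => [|w s IH]; first by rewrite big1.
rewrite map_cons cnt_cons IH.
rewrite (_ : \sum_(a < k i) cnt (w :: s) (tg a) =
   \sum_(a < k i) (tg a \in val w : nat) + \sum_(a < k i) cnt s (tg a))%N;
  last by rewrite -big_split.
congr (_ + _)%N; apply/esym/eqP; apply/sum_bool1; exact: ok_w.
Qed.

Lemma liftD_self D s : cnt s =1 D -> eN (Pm K s) (liftD D (map pr s)).
Proof.
move=> Hs; have Hl : liftP D (map pr s) s by split.
case: (liftD_spec D (map pr s)) => [[s' H' ->]|[N1 _]].
  exact: liftP_cg Hl H'.
by case: N1; exists s.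
Qed.

Lemma key (HW : white K B) (s1 s2 : seq TA) : cnt s1 =1 cnt s2 -> cg s1 s2.
Proof.
move=> H; pose D := cnt s1.
have Hq : toric_map (Pm K (map pr s1) - Pm K (map pr s2)) = 0.
  rewrite toricB (toric_of_cnt K (s1 := map pr s1) (s2 := map pr s2)) ?subrr //.
  by move=> i; rewrite !cnt_proj; apply: eq_bigr => a _; rewrite H.
have Hid := (HW _).1 (introT eqP Hq).
have HL := LD_ideal D Hid; rewrite /LD lextB -/(LD D _) -/(LD D _) in HL.
apply: eN_trans (liftD_self (s := s1) (D := D) (fun e => erefl)) _.
apply: eN_trans (eN_sym (LD_Pm D _)) _.
apply: eN_trans HL _.
apply: eN_trans (LD_Pm D _) _.
apply: eN_sym; apply: liftD_self => e; by rewrite /D H.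
Qed.

Definition rep (d : 'X_{1..#|{: EA}|}) : SP K BA :=
  Pm K (epsilon (inhabits [::]) (fun s : seq TA => cv s = d)).

Lemma main (HW : white K B) (p : SP K BA) : toric_map p = 0 -> N p.
Proof.
move=> Hp.
pose Phi := lext rep.
have Hm : forall m, eN ('X_[m]) (Phi (toric_map 'X_[m])).
  move=> m; rewrite (Xm_Pm K) toric_Pm_X /Phi lextX /rep.
  have Hs' := epsilon_spec (inhabits [::]) (fun s : seq TA => cv s = cv (@sq _ BA m))
     (ex_intro _ (@sq _ BA m) erefl).
  apply: key HW _ _ _; apply: (cnt_of_toric (K := K)); rewrite !toric_Pm_X.
  by rewrite Hs'.
have : eN p (Phi (toric_map p)).
  rewrite /eN [p]mpolyE toric_sum /Phi lext_sum.
  under [X in _ - X]eq_bigr do rewrite toricZ lextZ.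
  rewrite -sumrB; apply: Nsum => m _; rewrite -scalerBr; apply: NZ.
  exact: Hm.
by rewrite Hp /Phi lext0 /eN subr0.
Qed.
End Alpha.

Theorem corollary2p5 (K : fieldType) (n : nat) (k : 'I_n -> nat)
  (B : {set {set 'I_n}}) :
  (forall i, (0 < k i)%N) ->
  is_matroid B ->
  white K B ->
  white K (alpha_bases k B).
Proof.
move=> _ _ HW p; split.
- by move=> /eqP Hp; apply: main HW p Hp.
- by move=> Hi; apply/eqP; apply: ideal_toric.
Qed.
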